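(* Let $X$ be a Hausdorff topological space. For each arc $\Phi:[0,1]\to X$ (a continuous injective map), let $P_\Phi$ be the image $\Phi([0,1])$ linearly ordered by $\Phi(s)\le\Phi(t)$ iff $s\le t$. Let $A(X)$ be the set of all $P_\Phi$ for all arcs $\Phi$ in $X$, together with the trivial path $\{x\}$ for each $x\in X$. Then $A(X)$ is a path space.
   Context: A subset $Y$ of a linearly ordered set $X$ is called complete (in $X$) if every nonempty $Z \subseteq Y$ has a supremum and an infimum in $X$ and both lie in $Y$. A path is a linearly ordered set $(P,\le_P)$ that is complete in itself. Distinct paths may share elements; intersections and unions of paths refer to their underlying sets. A path is trivial if it has exactly one element. A set of paths is compatible if for any two paths $P,Q$ in it, $P\cap Q$ is complete in $P$ (with the order of $P$). For $x \le y$ in a path $P$, the segment of $P$ from $x$ to $y$ is the interval $[x,y]$ of $P$ with the induced order. A path $P$ connects to a path $Q$ if $P \cap Q=\{x\}$ where $x=\max P=\min Q$; in this case the concatenation of $P$ and $Q$ is $P\cup Q$ with the order extending both orders in which every element of $P$ precedes every element of $Q$. The inverse of a path is the same set with the reversed order. A dipath space is a compatible set of paths closed under segments and under concatenations (whenever $P,Q$ are members and $P$ connects to $Q$, their concatenation is a member). A path space is a dipath space that is also closed under inverses. *)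

(* Defs.v *)
From HB Require Import structures.
From mathcomp Require Import all_boot all_order all_algebra.
From mathcomp Require Import all_classical all_reals topology.
From mathcomp Require Import Rstruct Rstruct_topology.
From Stdlib Require Import Reals.
Set Implicit Arguments. Unset Strict Implicit. Unset Printing Implicit Defensive.

(* A "linearly ordered subset" of a carrier type X is encoded by its order
   relation R : X -> X -> Prop; its underlying set is {x | R x x}.  Hence a
   path is determined by (and identified with) its order relation. *)
Section Paths.
Variable X : Type.
Definition rel := X -> X -> Prop.

Definition carrier (R : rel) : X -> Prop := fun x => R x x.

Definition linear_order (R : rel) : Prop :=
  (forall x y, R x y -> R x x /\ R y y) /\
  (forall x y, R x y -> R y x -> x = y) /\
  (forall x y z, R x y -> R y z -> R x z) /\
  (forall x y, R x x -> R y y -> R x y \/ R y x).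

Definition is_sup (R : rel) (Z : X -> Prop) (s : X) : Prop :=
  R s s /\ (forall z, Z z -> R z s) /\
  (forall u, R u u -> (forall z, Z z -> R z u) -> R s u).

Definition is_inf (R : rel) (Z : X -> Prop) (s : X) : Prop :=
  R s s /\ (forall z, Z z -> R s z) /\
  (forall u, R u u -> (forall z, Z z -> R u z) -> R u s).

Definition complete_in (R : rel) (Y : X -> Prop) : Prop :=
  (forall y, Y y -> R y y) /\
  forall Z : X -> Prop, (forall z, Z z -> Y z) -> (exists z, Z z) ->
    (exists s, is_sup R Z s /\ Y s) /\ (exists i, is_inf R Z i /\ Y i).

Definition is_path (P : rel) : Prop := linear_order P /\ complete_in P (carrier P).

Definition compatible (S : rel -> Prop) : Prop :=
  forall P Q, S P -> S Q -> complete_in P (fun x => carrier P x /\ carrier Q x).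

Definition segment (P : rel) (x y : X) : rel :=
  fun a b => P x a /\ P a b /\ P b y.

Definition connects (P Q : rel) : Prop :=
  exists x, (forall z, (carrier P z /\ carrier Q z) <-> z = x) /\
    (carrier P x /\ forall z, carrier P z -> P z x) /\
    (carrier Q x /\ forall z, carrier Q z -> Q x z).

Definition concat (P Q : rel) : rel :=
  fun a b => P a b \/ Q a b \/ (carrier P a /\ carrier Q b).

Definition inverse (P : rel) : rel := fun a b => P b a.

Definition dipath_space (S : rel -> Prop) : Prop :=
  (forall P, S P -> is_path P) /\ compatible S /\
  (forall P x y, S P -> P x y -> S (segment P x y)) /\
  (forall P Q, S P -> S Q -> connects P Q -> S (concat P Q)).

Definition path_space (S : rel -> Prop) : Prop :=
  dipath_space S /\ forall P, S P -> S (inverse P).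
End Paths.

Local Open Scope classical_set_scope.

Definition arc (X : topologicalType) (Phi : R -> X) : Prop :=
  {within `[0%R, 1%R], continuous Phi} /\ {in `[0%R, 1%R] &, injective Phi}.

Definition arc_path (X : topologicalType) (Phi : R -> X) : rel X :=
  fun a b => exists s t : R, (0 <= s)%R /\ (s <= t)%R /\ (t <= 1)%R /\
                             a = Phi s /\ b = Phi t.

Definition trivial_path (X : Type) (x : X) : rel X := fun a b => a = x /\ b = x.

Definition arc_space (X : topologicalType) : rel X -> Prop :=
  fun P => (exists Phi, arc Phi /\ P = arc_path Phi) \/
           (exists x, P = trivial_path x).

(* Main.v *)
Require Import Defs.
From mathcomp Require Import all_classical all_reals topology.
From HB Require Import structures.
From mathcomp Require Import all_boot all_order all_algebra.
From mathcomp Require Import normedtype Rstruct Rstruct_topology.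
From Stdlib Require Import Reals Lra.
Import Order.TTheory GRing.Theory Num.Theory.
Local Open Scope classical_set_scope.

Lemma nbhsRP (x : R) (P : set R) : nbhs x P <-> exists d, Rlt 0 d /\ forall y, Rlt (Rabs (Rminus y x)) d -> P y.
Proof.
rewrite nbhs_ballP; split.
  move=> [e /= /RltP e0 H]; exists e; split => // y hy; apply: H.
  rewrite /ball /=. apply/RltP. change (Rlt (Rabs (Rminus x y)) e).
  by rewrite Rabs_minus_sym.
move=> [d [d0 H]]; exists d; first by apply/RltP.
move=> y hy; apply: H; rewrite Rabs_minus_sym.
move: hy; rewrite /ball /= => /RltP; exact.
Qed.

Definition cont01 {X : topologicalType} (f : R -> X) := {within `[0%R, 1%R], continuous f}.

Lemma in01 (x : R) : (`[0%R, 1%R] : set R) x <-> Rle 0 x /\ Rle x 1.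
Proof.
rewrite /= in_itv /=; split.
  by move/andP=> [/RleP h1 /RleP h2].
by move=> [h1 h2]; apply/andP; split; apply/RleP.
Qed.

Lemma cont01P {X : topologicalType} (f : R -> X) : cont01 f <->
  forall x, Rle 0 x -> Rle x 1 -> forall V, nbhs (f x) V ->
    exists d, Rlt 0 d /\ forall y, Rle 0 y -> Rle y 1 -> Rlt (Rabs (Rminus y x)) d -> V (f y).
Proof.
rewrite /cont01 subspace_continuousP; split.
  move=> H x x0 x1 V /(H x (proj2 (in01 x) (conj x0 x1))).
  rewrite /= /within /= nbhs_simpl /=. move=> /nbhsRP [d [d0 Hd]].
  exists d; split => // y y0 y1 hy; apply: (Hd y hy). exact/in01.
move=> H x /in01 [x0 x1] V /(H x x0 x1) [d [d0 Hd]].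
rewrite /= /within /= nbhs_simpl /=; apply/nbhsRP; exists d; split => // y hy /in01 [y0 y1].
exact: Hd.
Qed.

Local Open Scope R_scope.

Definition inj01 {X : Type} (f : R -> X) :=
  forall s t, 0 <= s <= 1 -> 0 <= t <= 1 -> f s = f t -> s = t.

Lemma arcP {X : topologicalType} (f : R -> X) : Defs.arc f <-> cont01 f /\ inj01 f.
Proof.
rewrite /Defs.arc /inj01; split => -[c i]; split => //.
  move=> s t hs ht; apply: i; rewrite in_setE; exact/in01.
move=> s t; rewrite !in_setE => /in01 hs /in01 ht; exact: i.
Qed.

Lemma relext {X : Type} (P Q : Defs.rel X) : (forall a b, P a b <-> Q a b) -> P = Q.
Proof.
move=> H; apply: funext => a; apply: funext => b; apply: propext; exact: H.
Qed.

Section ArcPath.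
Variable X : topologicalType.
Implicit Types f : R -> X.

Lemma AP_intro f s t : 0 <= s -> s <= t -> t <= 1 -> arc_path f (f s) (f t).
Proof. by move=> *; exists s, t. Qed.

Lemma AP_carrier f a : carrier (arc_path f) a <-> exists s, (0 <= s <= 1) /\ a = f s.
Proof.
split.
  move=> [s [t [h0 [h1 [h2 [-> _]]]]]]; exists s; split => //; lra.
move=> [s [hs ->]]; apply: AP_intro; lra.
Qed.

Lemma AP_le {f s t} : inj01 f -> 0 <= s <= 1 -> 0 <= t <= 1 ->
  arc_path f (f s) (f t) -> s <= t.
Proof.
move=> inj hs ht [s' [t' [h0 [h1 [h2 [e1 e2]]]]]].
have -> : s = s' by apply: inj => //; lra.
have -> : t = t' by apply: inj => //; lra.
done.
Qed.

Lemma AP_linear f : inj01 f -> linear_order (arc_path f).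
Proof.
move=> inj; split; [|split; [|split]].
- move=> x y [s [t [h0 [h1 [h2 [-> ->]]]]]]; split; apply: AP_intro; lra.
- move=> x y [s [t [h0 [h1 [h2 [-> ->]]]]]] h.
  have := AP_le inj _ _ h; move=> H.
  have -> : s = t by apply: Rle_antisym => //; apply: H; lra.
  done.
- move=> x y z [s [t [h0 [h1 [h2 [-> ->]]]]]] [t' [u [h0' [h1' [h2' [e ->]]]]]].
  have et : t = t' by apply: inj => //; lra.
  apply: AP_intro; lra.
- move=> x y /AP_carrier [s [hs ->]] /AP_carrier [t [ht ->]].
  case: (Rle_or_lt s t) => h; [left|right]; apply: AP_intro; lra.
Qed.

Lemma AP_rev f : inverse (arc_path f) = arc_path (fun u => f (1 - u)).
Proof.
have e : forall t, f t = f (1 - (1 - t)) by move=> t; congr f; ring.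
apply: relext => a b; split.
  move=> [s [t [h0 [h1 [h2 [-> ->]]]]]]; rewrite (e s) (e t).
  exists (1 - t), (1 - s); do !split => //; lra.
move=> [s [t [h0 [h1 [h2 [-> ->]]]]]]; exists (1 - t), (1 - s); do !split => //; lra.
Qed.

Lemma inj01_rev {f} : inj01 f -> inj01 (fun u => f (1 - u)).
Proof. move=> inj s t hs ht /inj H; have := H ltac:(lra) ltac:(lra); lra. Qed.

Lemma arc_sup {f} (inj : inj01 f) (Z : X -> Prop)
  (HZ : forall z, Z z -> carrier (arc_path f) z) (ne : exists z, Z z) :
  exists sg, (0 <= sg <= 1) /\ is_sup (arc_path f) Z (f sg) /\
    forall d, 0 < d -> exists s, (0 <= s <= 1) /\ Z (f s) /\ Rabs (s - sg) < d.
Proof.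
pose E := fun s => (0 <= s <= 1) /\ Z (f s).
have bE : bound E by exists 1 => s [hs _]; lra.
have neE : exists s, E s.
  case: ne => z Zz; case/AP_carrier: (HZ z Zz) => s [hs e].
  by exists s; split => //; rewrite -e.
case: (completeness E bE neE) => sg [ub lub].
case: neE => s0 Es0.
have sg0 : 0 <= sg by have := ub s0 Es0; case: Es0 => ? _; lra.
have sg1 : sg <= 1 by apply: lub => s [hs _]; lra.
exists sg; split; first lra.
split.
  split; first by apply: AP_intro; lra.
  split.
    move=> z Zz; case/AP_carrier: (HZ z Zz) => s [hs e]; rewrite e.
    have Es : E s by split => //; rewrite -e.
    have := ub s Es; move=> ?; apply: AP_intro; lra.
  move=> u /AP_carrier [w [hw ->]] H.
  have : sg <= w.
    apply: lub => s [hs Zs]; apply: (AP_le inj hs hw); exact: H.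
  move=> ?; apply: AP_intro; lra.
move=> d d0.
case: (pselect (exists s, (0 <= s <= 1) /\ Z (f s) /\ Rabs (s - sg) < d)) => // N.
exfalso.
have : sg <= sg - d; last lra.
apply: lub => s Es.
have := ub s Es; move=> hs.
case: (Rle_or_lt s (sg - d)) => // h; exfalso; apply: N; exists s.
case: Es => ? ?; do !split => //.
rewrite Rabs_left1; lra.
Qed.

Lemma complete_arc f (inj : inj01 f) (Y : X -> Prop)
  (HY : forall y, Y y -> carrier (arc_path f) y)
  (clY : forall sg, 0 <= sg <= 1 ->
     (forall d, 0 < d -> exists s, (0 <= s <= 1) /\ Y (f s) /\ Rabs (s - sg) < d) ->
     Y (f sg)) :
  complete_in (arc_path f) Y.
Proof.
split => // Z ZY ne; split.
  have [sg [hsg [sup app]]] := arc_sup inj _ (fun z Zz => HY z (ZY z Zz)) ne.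
  exists (f sg); split => //; apply: clY => // d d0.
  have [s [hs [Zs ds]]] := app d d0; exists s; split => //; split => //; exact: ZY.
pose g := fun u => f (1 - u).
have HZ : forall z, Z z -> carrier (arc_path g) z.
  by move=> z /ZY /HY; rewrite /carrier -AP_rev.
have [sg [hsg [sup app]]] := arc_sup (inj01_rev inj) _ HZ ne.
exists (g sg); split.
  by move: sup; rewrite /g -AP_rev.
apply: clY; first lra.
move=> d d0; have [s [hs [Zs ds]]] := app d d0; exists (1 - s); split; first lra.
split; first exact: ZY.
by rewrite (_ : 1 - s - (1 - sg) = - (s - sg)); [rewrite Rabs_Ropp|ring].
Qed.

Lemma arc_path_is_path f : inj01 f -> is_path (arc_path f).
Proof.
move=> inj; split; first exact: AP_linear.
apply: complete_arc => // sg hsg _; apply: AP_intro; lra.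
Qed.

End ArcPath.
Arguments AP_le {X f s t}.
Arguments AP_linear {X f}.
Arguments AP_carrier {X f a}.
Arguments AP_intro {X f s t}.
Arguments arc_sup {X f}.
Arguments inj01_rev {X f}.
Arguments complete_arc {X f}.
Arguments arc_path_is_path {X f}.
Arguments AP_rev {X}.

Section Triv.
Variable X : Type.

Lemma complete_trivial (p : X) (Y : X -> Prop) :
  (forall y, Y y -> y = p) -> complete_in (trivial_path p) Y.
Proof.
move=> HY; split; first by move=> y /HY ->.
move=> Z ZY [z0 Zz0].
have ez : forall z, Z z -> z = p by move=> z /ZY /HY.
have Yp : Y p by rewrite -(ez z0 Zz0); exact: ZY.
split; exists p; (split => //); split => //; split.
- by move=> z /ez ->.
- by move=> u [-> _].
- by move=> z /ez ->.
- by move=> u [-> _].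
Qed.

Lemma trivial_is_path (p : X) : is_path (trivial_path p).
Proof.
split.
  split; [|split; [|split]].
  - by move=> x y [-> ->].
  - by move=> x y [-> ->].
  - by move=> x y z [-> ->] [_ ->].
  - by move=> x y [-> _] [-> _]; left.
apply: complete_trivial; by move=> y [].
Qed.

Lemma trivial_inverse (p : X) : inverse (trivial_path p) = trivial_path p.
Proof. by apply: relext => a b; split => -[-> ->]. Qed.

Lemma trivial_segment (p x y : X) : trivial_path p x y ->
  segment (trivial_path p) x y = trivial_path p.
Proof.
move=> [-> ->]; apply: relext => a b; split.
  by move=> [[_ ea] [[_ eb] _]].
by move=> [-> ->].
Qed.

Lemma segment_same (P : Defs.rel X) x : linear_order P -> P x x ->
  segment P x x = trivial_path x.
Proof.
move=> [_ [anti [tr _]]] Pxx; apply: relext => a b; split.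
  move=> [xa [ab bx]].
  have ea : a = x by apply: anti => //; exact: tr ab bx.
  have eb : b = x by apply: anti => //; exact: tr xa ab.
  by [].
by move=> [-> ->].
Qed.

Lemma concat_triv_l (p : X) (Q : Defs.rel X) : connects (trivial_path p) Q ->
  concat (trivial_path p) Q = Q.
Proof.
move=> [x [I [[ex _] [Qx minQ]]]].
have ex' : x = p by case: ex.
subst x.
apply: relext => a b; split.
  move=> [[-> ->] // | [// | [[-> _] Qb]]]; exact: minQ.
by move=> h; right; left.
Qed.

Lemma concat_triv_r (q : X) (P : Defs.rel X) : connects P (trivial_path q) ->
  concat P (trivial_path q) = P.
Proof.
move=> [x [I [[Px maxP] [ex _]]]].
have ex' : x = q by case: ex.
subst x.
apply: relext => a b; split.
  move=> [// | [[-> ->] // | [Pa [-> _]]]]; exact: maxP.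
by move=> h; left.
Qed.

End Triv.

Section Topo.
Variable X : topologicalType.
Implicit Types f : R -> X.

Lemma closed_lim f (cf : cont01 f) (C : set X) (clC : topology_structure.closed C) sg :
  0 <= sg <= 1 ->
  (forall d, 0 < d -> exists s, (0 <= s <= 1) /\ C (f s) /\ Rabs (s - sg) < d) ->
  C (f sg).
Proof.
move=> hsg app; apply: clC => B /(proj1 (cont01P f) cf sg ltac:(lra) ltac:(lra)).
move=> [d [d0 Hd]]; have [s [hs [Cs ds]]] := app d d0.
exists (f s); split => //; apply: Hd => //; lra.
Qed.

Lemma arc_image_closed f : hausdorff_space X -> cont01 f ->
  topology_structure.closed (f @` (`[0%R, 1%R] : set R)).
Proof.
move=> hX cf; apply: compact_closed => //.
apply: continuous_compact => //; exact: segment_compact.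
Qed.

Lemma AP_image f a : carrier (arc_path f) a <-> (f @` (`[0%R, 1%R] : set R)) a.
Proof.
rewrite AP_carrier; split.
  by move=> [s [hs ->]]; exists s => //; apply/in01.
by move=> [s /in01 hs <-]; exists s.
Qed.

Lemma rev_cont f : cont01 f -> cont01 (fun u => f (1 - u)).
Proof.
move=> /cont01P cf; apply/cont01P => x x0 x1 V /= /(cf (1 - x) ltac:(lra) ltac:(lra)).
move=> [d [d0 Hd]]; exists d; split => // y y0 y1 hy; apply: Hd; try lra.
by rewrite (_ : 1 - y - (1 - x) = - (y - x)); [rewrite Rabs_Ropp|ring].
Qed.

Lemma seg_cont f s t : cont01 f -> 0 <= s -> s < t -> t <= 1 ->
  cont01 (fun u => f (s + u * (t - s))).
Proof.
move=> /cont01P cf s0 st t1; apply/cont01P => x x0 x1 V /=.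
move=> /(cf (s + x * (t - s)) ltac:(nra) ltac:(nra)) [d [d0 Hd]].
exists (d / (t - s)); split.
  apply: Rdiv_lt_0_compat; lra.
move=> y y0 y1 hy; apply: Hd; try nra.
have e : d / (t - s) * (t - s) = d by field; lra.
rewrite (_ : s + y * (t - s) - (s + x * (t - s)) = (y - x) * (t - s)); last ring.
rewrite Rabs_mult (Rabs_pos_eq (t - s)); last lra.
have h := Rabs_pos (y - x).
nra.
Qed.

Lemma seg_inj f s t : inj01 f -> 0 <= s -> s < t -> t <= 1 ->
  inj01 (fun u => f (s + u * (t - s))).
Proof.
move=> inj s0 st t1 u v hu hv /inj e.
have e' := e ltac:(nra) ltac:(nra).
apply: (Rmult_eq_reg_r (t - s)); lra.
Qed.

Lemma seg_rel f s t : inj01 f -> 0 <= s -> s < t -> t <= 1 ->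
  segment (arc_path f) (f s) (f t) = arc_path (fun u => f (s + u * (t - s))).
Proof.
move=> inj s0 st t1; apply: relext => a b; split.
  move=> [xa [ab yb]].
  have := proj1 AP_carrier (proj1 (proj1 (AP_linear inj) _ _ ab)).
  move=> [al [hal ea]]; subst a.
  have := proj1 AP_carrier (proj2 (proj1 (AP_linear inj) _ _ ab)).
  move=> [be [hbe eb]]; subst b.
  have hs : 0 <= s <= 1 by lra.
  have ht : 0 <= t <= 1 by lra.
  have h1 := AP_le inj hs hal xa.
  have h2 := AP_le inj hal hbe ab.
  have h3 := AP_le inj hbe ht yb.
  exists ((al - s) / (t - s)), ((be - s) / (t - s)).
  have ts : 0 < t - s by lra.
  split; first by apply: Rmult_le_pos; [lra| apply: Rlt_le; apply: Rinv_0_lt_compat].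
  split; first by apply: Rmult_le_compat_r; [apply: Rlt_le; apply: Rinv_0_lt_compat|lra].
  split.
    apply: (Rmult_le_reg_r (t - s)) => //.
    rewrite /Rdiv Rmult_assoc Rinv_l; lra.
  split; congr f; field; lra.
move=> [u [v [h0 [h1 [h2 [-> ->]]]]]].
split; last split; apply: AP_intro; nra.
Qed.

End Topo.

Definition Gam {X : Type} (f g : R -> X) (u : R) :=
  if Rle_dec u (1/2) then f (2 * u) else g (2 * u - 1).

Section Concat.
Variable X : topologicalType.
Variables f g : R -> X.
Hypothesis fg : f 1 = g 0.

Lemma G_l u : u <= 1/2 -> Gam f g u = f (2 * u).
Proof. by rewrite /Gam; case: Rle_dec. Qed.

Lemma G_r u : 1/2 <= u -> Gam f g u = g (2 * u - 1).
Proof.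
rewrite /Gam; case: Rle_dec => // h h'.
have -> : 2 * u = 1 by lra.
by rewrite fg; congr g; ring.
Qed.

Lemma G_lf s : Gam f g (s / 2) = f s \/ 1 < s.
Proof.
case: (Rle_or_lt s 1) => h; [left|by right].
by rewrite G_l; [congr f; field|lra].
Qed.

Lemma G_lf' s : s <= 1 -> Gam f g (s / 2) = f s.
Proof. by move=> h; rewrite G_l; [congr f; field|lra]. Qed.

Lemma G_rg' s : 0 <= s -> Gam f g ((s + 1) / 2) = g s.
Proof. by move=> h; rewrite G_r; [congr g; field|lra]. Qed.

Lemma concat_cont : cont01 f -> cont01 g -> cont01 (Gam f g).
Proof.
move=> /cont01P cf /cont01P cg; apply/cont01P => x x0 x1 V.
case: (Rtotal_order x (1/2)) => [hx|[hx|hx]].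
- rewrite G_l; last lra.
  move=> /(cf (2 * x) ltac:(lra) ltac:(lra)) [d [d0 Hd]].
  exists (Rmin (d / 2) (1/2 - x)); split.
    apply: Rmin_pos; lra.
  move=> y y0 y1 hy.
  have m1 := Rmin_l (d / 2) (1/2 - x); have m2 := Rmin_r (d / 2) (1/2 - x).
  have [a1 a2] := Rabs_def2 _ _ hy.
  rewrite G_l; last lra.
  apply: Hd; try lra.
  apply: Rabs_def1; lra.
- subst x; rewrite G_l; last lra.
  rewrite (_ : 2 * (1/2) = 1); last field.
  move=> hV; have [d1 [d10 H1]] := cf 1 ltac:(lra) ltac:(lra) V hV.
  rewrite fg in hV; have [d2 [d20 H2]] := cg 0 ltac:(lra) ltac:(lra) V hV.
  exists (Rmin d1 d2 / 2); split.
    have := Rmin_pos _ _ d10 d20; lra.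
  move=> y y0 y1 hy.
  have m1 := Rmin_l d1 d2; have m2 := Rmin_r d1 d2.
  have [a1 a2] := Rabs_def2 _ _ hy.
  case: (Rle_or_lt y (1/2)) => hy2.
    rewrite G_l //; apply: H1; try lra; apply: Rabs_def1; lra.
  rewrite G_r; last lra.
  apply: H2; try lra; apply: Rabs_def1; lra.
- rewrite G_r; last lra.
  move=> /(cg (2 * x - 1) ltac:(lra) ltac:(lra)) [d [d0 Hd]].
  exists (Rmin (d / 2) (x - 1/2)); split.
    apply: Rmin_pos; lra.
  move=> y y0 y1 hy.
  have m1 := Rmin_l (d / 2) (x - 1/2); have m2 := Rmin_r (d / 2) (x - 1/2).
  have [a1 a2] := Rabs_def2 _ _ hy.
  rewrite G_r; last lra.
  apply: Hd; try lra.
  apply: Rabs_def1; lra.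
Qed.

Hypothesis cross : forall s t, 0 <= s <= 1 -> 0 <= t <= 1 -> f s = g t -> s = 1 /\ t = 0.

Lemma concat_inj : inj01 f -> inj01 g -> inj01 (Gam f g).
Proof.
move=> jf jg u v hu hv.
case: (Rle_or_lt u (1/2)) => hu2; case: (Rle_or_lt v (1/2)) => hv2.
- rewrite !G_l // => /jf H; have := H ltac:(lra) ltac:(lra); lra.
- rewrite G_l // G_r; last lra.
  move=> /cross H; have := H ltac:(lra) ltac:(lra); lra.
- rewrite G_r; last lra; rewrite G_l //.
  move=> e; have := cross (2 * v) (2 * u - 1) ltac:(lra) ltac:(lra) (esym e); lra.
- rewrite !G_r; try lra.
  move=> /jg H; have := H ltac:(lra) ltac:(lra); lra.
Qed.

Lemma concat_rel : concat (arc_path f) (arc_path g) = arc_path (Gam f g).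
Proof.
apply: relext => a b; split.
  move=> [[s [t [h0 [h1 [h2 [-> ->]]]]]] | [[s [t [h0 [h1 [h2 [-> ->]]]]]] | [ha hb]]].
  - rewrite -(G_lf' s); last lra; rewrite -(G_lf' t); last lra; apply: AP_intro; lra.
  - rewrite -(G_rg' s); last lra; rewrite -(G_rg' t); last lra; apply: AP_intro; lra.
  - move: ha hb => /AP_carrier [s [hs ->]] /AP_carrier [t [ht ->]].
    rewrite -(G_lf' s); last lra; rewrite -(G_rg' t); last lra; apply: AP_intro; lra.
move=> [u [v [h0 [h1 [h2 [-> ->]]]]]].
case: (Rle_or_lt v (1/2)) => hv.
  left; rewrite !G_l; try lra; apply: AP_intro; lra.
case: (Rle_or_lt u (1/2)) => hu.
  right; right; rewrite G_l // G_r; last lra.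
  split; apply/AP_carrier; [exists (2 * u)|exists (2 * v - 1)]; split => //; lra.
right; left; rewrite !G_r; try lra; apply: AP_intro; lra.
Qed.

End Concat.

Lemma arc_space_case {X : topologicalType} (P : Defs.rel X) : arc_space P ->
  (exists f, cont01 f /\ inj01 f /\ P = arc_path f) \/ (exists p, P = trivial_path p).
Proof.
move=> [[f [/arcP [c i] ->]]|[p ->]]; [left; exists f | right; exists p] => //.
Qed.

Lemma arc_space_arc {X : topologicalType} (f : R -> X) : cont01 f -> inj01 f ->
  arc_space (arc_path f).
Proof. by move=> c i; left; exists f; split => //; apply/arcP. Qed.

Lemma arc_space_triv {X : topologicalType} (p : X) : arc_space (trivial_path p).
Proof. by right; exists p. Qed.

Lemma compat_arc {X : topologicalType} (hX : hausdorff_space X) (f : R -> X) Q :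
  cont01 f -> inj01 f -> arc_space Q ->
  complete_in (arc_path f) (fun x => carrier (arc_path f) x /\ carrier Q x).
Proof.
move=> cf jf /arc_space_case [[g [cg [jg ->]]]|[q ->]].
  apply: complete_arc => //; first by move=> y [].
  move=> sg hsg app; split; first by apply: AP_intro; lra.
  apply/AP_image; apply: closed_lim => //.
    exact: arc_image_closed.
  move=> d d0; have [s [hs [[_ Ys] ds]]] := app d d0.
  by exists s; split => //; split => //; apply/AP_image.
apply: complete_arc => //; first by move=> y [].
move=> sg hsg app.
have [s0 [hs0 [[_ [e0 _]] _]]] := app 1 ltac:(lra).
have es : s0 = sg.
  case: (Req_dec s0 sg) => // ne.
  have dpos : 0 < Rabs (s0 - sg) by apply: Rabs_pos_lt; lra.
  have [s [hs [[_ [e _]] ds]]] := app _ dpos.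
  have ss : s = s0 by apply: jf => //; rewrite e e0.
  subst s; lra.
by rewrite -es; split; [apply: AP_intro; lra|split].
Qed.

Theorem mainTheorem4 (X : topologicalType) (hX : hausdorff_space X) :
  path_space (@arc_space X).
Proof.
split; last first.
  move=> P /arc_space_case [[f [cf [jf ->]]]|[p ->]].
    rewrite AP_rev; apply: arc_space_arc; [exact: rev_cont|exact: inj01_rev].
  rewrite trivial_inverse; exact: arc_space_triv.
split.
  move=> P /arc_space_case [[f [cf [jf ->]]]|[p ->]].
    exact: arc_path_is_path.
  exact: trivial_is_path.
split.
  move=> P Q /arc_space_case [[f [cf [jf ->]]]|[p ->]] HQ.
    exact: compat_arc.
  by apply: complete_trivial => y [[-> _] _].
split.
  move=> P x y /arc_space_case [[f [cf [jf ->]]]|[p ->]] Pxy.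
    case: (Pxy) => [s [t [h0 [h1 [h2 [ex ey]]]]]]; subst x y.
    case: (Rle_lt_or_eq_dec _ _ h1) => st.
      rewrite seg_rel //; apply: arc_space_arc.
        exact: seg_cont.
      exact: seg_inj.
    subst t; rewrite segment_same; first exact: arc_space_triv.
      exact: AP_linear.
    exact: Pxy.
  rewrite trivial_segment //; exact: arc_space_triv.
move=> P Q /arc_space_case [[f [cf [jf ->]]]|[p ->]]; last first.
  by move=> SQ c; rewrite concat_triv_l.
move=> /arc_space_case [[g [cg [jg ->]]]|[q ->]]; last first.
  by move=> c; rewrite concat_triv_r //; apply: arc_space_arc.
move=> [x [Ix [[Px maxP] [Qx minQ]]]].
have xf : x = f 1.
  have := maxP (f 1) ltac:(apply: AP_intro; lra).
  case/AP_carrier: Px => t0 [ht0 ->] H.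
  have h1 : 0 <= 1 <= 1 by lra.
  have := AP_le jf h1 ht0 H; move=> ?.
  by congr f; lra.
have xg : x = g 0.
  have := minQ (g 0) ltac:(apply: AP_intro; lra).
  case/AP_carrier: Qx => t0 [ht0 ->] H.
  have h1 : 0 <= 0 <= 1 by lra.
  have := AP_le jg ht0 h1 H; move=> ?.
  by congr g; lra.
have fg : f 1 = g 0 by rewrite -xf -xg.
have cross : forall s t, 0 <= s <= 1 -> 0 <= t <= 1 -> f s = g t -> s = 1 /\ t = 0.
  move=> s t hs ht e.
  have hz : f s = x.
    apply/Ix; split; apply/AP_carrier; [exists s|exists t]; split => //.
  split.
    by apply: jf => //; [lra|rewrite hz xf].
  by apply: jg => //; [lra|rewrite -e hz xg].
rewrite concat_rel //; apply: arc_space_arc.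
  exact: concat_cont.
exact: concat_inj.
Qed.
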